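(* Let $\mathbf{h}_1,\mathbf{h}_2\in\mathbb{C}^M$ be nonzero, $P>0$, and $f(\mathbf{w})=\min\{|\mathbf{h}_1^H\mathbf{w}|^2,|\mathbf{h}_2^H\mathbf{w}|^2\}$. Consider $\max_{\mathbf{w}\in\mathbb{C}^M,\ \mathbf{w}^H\mathbf{w}=P} f(\mathbf{w})$. Scenario 1: if $\mathbf{h}_1=\tau\mathbf{h}_2$ for some $\tau\in\mathbb{C}$, the maximum equals $\min\{P\|\mathbf{h}_1\|^2,P\|\mathbf{h}_2\|^2\}$, attained at $\mathbf{w}=\sqrt{P}\,\mathbf{h}_2/\|\mathbf{h}_2\|$ (equivalently, up to a unit-modulus phase, $\sqrt P\,\mathbf{h}_1/\|\mathbf{h}_1\|$). Scenario 2: if $\mathbf{h}_1,\mathbf{h}_2$ are linearly independent, with $\lambda_1,\lambda_2,\mathbf{V},\theta,\alpha,\beta,\gamma$ as in the context, the maximum is attained at $\mathbf{w}^{\rm opt}=\mathbf{V}\tilde{\mathbf{w}}^{\rm opt}$, where: (1) if $\lambda_1\le\lambda_2$: (a) for $0\le\sin\theta\le\lambda_1/\lambda_2$, the maximum is $\frac{P\lambda_1\lambda_2}{\lambda_1+\lambda_2}\frac{(1+\sin\theta)^2}{\cos^2\theta}$ with $\tilde{\mathbf{w}}^{\rm opt}=[\sqrt{\tfrac{P\lambda_2}{\lambda_1+\lambda_2}}e^{j\beta},\sqrt{\tfrac{P\lambda_1}{\lambda_1+\lambda_2}}e^{j(\beta-\alpha)},0,\dots,0]^T$; (b) for $\lambda_1/\lambda_2<\sin\theta<1$,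 the maximum is $\frac{P(\lambda_1+\lambda_2\sin^2\theta)}{\cos^2\theta}$ with $\tilde{\mathbf{w}}^{\rm opt}=[\sqrt{\tfrac{P\lambda_1}{\lambda_1+\lambda_2\sin^2\theta}}e^{j\beta},\sqrt{\tfrac{P\lambda_2\sin^2\theta}{\lambda_1+\lambda_2\sin^2\theta}}e^{j(\beta-\alpha)},0,\dots,0]^T$; (2) if $\lambda_1>\lambda_2$: (a) for $0\le\sin\theta\le\lambda_2/\lambda_1$, the maximum is $\frac{P\lambda_1\lambda_2}{\lambda_1+\lambda_2}\frac{(1+\sin\theta)^2}{\cos^2\theta}$ with $\tilde{\mathbf{w}}^{\rm opt}=[\sqrt{\tfrac{P\lambda_2}{\lambda_1+\lambda_2}}e^{j(\gamma+\alpha)},\sqrt{\tfrac{P\lambda_1}{\lambda_1+\lambda_2}}e^{j\gamma},0,\dots,0]^T$; (b) for $\lambda_2/\lambda_1<\sin\theta<1$, the maximum is $\frac{P(\lambda_1\sin^2\theta+\lambda_2)}{\cos^2\theta}$ with $\tilde{\mathbf{w}}^{\rm opt}=[\sqrt{\tfrac{P\lambda_1}{\lambda_1+\lambda_2\csc^2\theta}}e^{j(\gamma+\alpha)},\sqrt{\tfrac{P\lambda_2}{\lambda_1\sin^2\theta+\lambda_2}}e^{j\gamma},0,\dots,0]^T$.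
   Context: For linearly independent $\mathbf{h}_1,\mathbf{h}_2\in\mathbb{C}^M$, let $\mathbf{A}=\mathbf{h}_1\mathbf{h}_1^H-\mathbf{h}_2\mathbf{h}_2^H$ (rank 2), with eigendecomposition $\mathbf{A}=\mathbf{V}\boldsymbol{\Sigma}\mathbf{V}^H$, $\mathbf{V}$ unitary, $\boldsymbol{\Sigma}=\mathrm{diag}(\lambda_1,-\lambda_2,0,\dots,0)$, $\lambda_1,\lambda_2>0$. Let $\tilde{\mathbf{h}}_k=\mathbf{V}^H\mathbf{h}_k$, whose entries beyond the second vanish; write $\tilde{\mathbf{h}}_1=[\tilde h_{1,1},\tilde h_{1,2},0,\dots]^T$, $\tilde{\mathbf{h}}_2=[\tilde h_{2,1},\tilde h_{2,2},0,\dots]^T$. Define $\theta=\arccos\frac{\sqrt{\lambda_1}}{|\tilde h_{1,1}|}\in[0,\pi/2)$, $\beta=\arg\tilde h_{1,1}$, $\gamma=\arg\tilde h_{2,2}$, $\alpha=\arg\tilde h_{2,1}-\arg\tilde h_{2,2}$ (arbitrary if $\tilde h_{2,1}=0$). $j=\sqrt{-1}$. *)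

(* Defs.v *)
(* Complex numbers are modelled by an arbitrary
   numClosedFieldType C (e.g. algC); all quantities in the theorem are
   algebraic in the data. *)
From HB Require Import structures.
From mathcomp Require Import all_boot all_order all_algebra.
From mathcomp Require Import sesquilinear spectral.
Set Implicit Arguments. Unset Strict Implicit. Unset Printing Implicit Defensive.
Import Order.TTheory GRing.Theory Num.Theory.
Local Open Scope ring_scope.
Local Open Scope sesquilinear_scope.

Section Defs.
Variable C : numClosedFieldType.
Variable M : nat.

Definition inner (x y : 'cV[C]_M) : C := (x ^t* *m y) 0 0.

Definition norm2 (x : 'cV[C]_M) : C := inner x x.

Definition fobj (h1 h2 w : 'cV[C]_M) : C :=
  Num.min (`|inner h1 w| ^+ 2) (`|inner h2 w| ^+ 2).

Definition is_max_at (h1 h2 : 'cV[C]_M) (P : C) (w : 'cV[C]_M) (v : C) : Prop :=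
  [/\ inner w w = P, fobj h1 h2 w = v &
      forall w' : 'cV[C]_M, inner w' w' = P -> fobj h1 h2 w' <= v].

Definition phase (z : C) : C := z / `|z|.

Definition Sigma (i0 i1 : 'I_M) (l1 l2 : C) : 'M[C]_M :=
  diag_mx (\row_i (if i == i0 then l1 else if i == i1 then - l2 else 0)).

Definition vec2 (i0 i1 : 'I_M) (a b : C) : 'cV[C]_M :=
  \col_i (if i == i0 then a else if i == i1 then b else 0).
End Defs.

(* Main.v *)
Require Import Defs.
From HB Require Import structures.
From mathcomp Require Import all_boot all_order all_algebra.
From mathcomp Require Import sesquilinear spectral ring.
Import Order.TTheory GRing.Theory Num.Theory.
Local Open Scope ring_scope.
Local Open Scope sesquilinear_scope.
Set Implicit Arguments. Unset Strict Implicit. Unset Printing Implicit Defensive.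


Lemma nn_real (R : numDomainType) (x : R) : 0 <= x -> x \is Num.real.
Proof. exact: ger0_real. Qed.

Lemma sq_le (R : numDomainType) (x y : R) : 0 <= x -> x <= y -> x ^+ 2 <= y ^+ 2.
Proof. move=> x0 xy; rewrite ler_sqr ?nnegrE //; exact: le_trans xy. Qed.

Lemma cs2 (R : numDomainType) (a b p q : R) : 0 <= a -> 0 <= b -> 0 <= p -> 0 <= q ->
  (a * p + b * q) ^+ 2 <= (a ^+ 2 + b ^+ 2) * (p ^+ 2 + q ^+ 2).
Proof.
move=> a0 b0 p0 q0; rewrite -subr_ge0.
have -> : (a ^+ 2 + b ^+ 2) * (p ^+ 2 + q ^+ 2) - (a * p + b * q) ^+ 2 = (a * q - b * p) ^+ 2 by ring.
apply: real_exprn_even_ge0 => //; apply: realB; apply: realM; exact: ger0_real.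
Qed.

Lemma ubA (R : numFieldType) (al be s p q g P : R) : 0 < al -> 0 < be -> 0 <= s -> s < 1 ->
  s * al ^+ 2 <= be ^+ 2 -> s * be ^+ 2 <= al ^+ 2 -> 0 <= p -> 0 <= q -> p ^+ 2 + q ^+ 2 <= P ->
  0 <= g -> g <= al * p + s * be * q -> g <= s * al * p + be * q ->
  g ^+ 2 <= P * al ^+ 2 * be ^+ 2 * (1 + s) ^+ 2 / (al ^+ 2 + be ^+ 2).
Proof.
move=> al0 be0 s0 s1 h1 h2 p0 q0 pq g0 g1 g2.
set D := al ^+ 2 + be ^+ 2.
have D0 : 0 < D by rewrite /D addr_gt0 // exprn_gt0.
have w1 : 0 <= be ^+ 2 * (1 + s) - s * D.
  by rewrite subr_ge0 /D; rewrite -subr_ge0 in h1; rewrite -subr_ge0; 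
     have -> : be ^+ 2 * (1 + s) - s * (al ^+ 2 + be ^+ 2) = be ^+ 2 - s * al ^+ 2 by ring.
have w2 : 0 <= D - be ^+ 2 * (1 + s).
  by rewrite -subr_ge0 in h2; have -> : D - be ^+ 2 * (1 + s) = al ^+ 2 - s * be ^+ 2 by rewrite /D; ring.
have s1' : 0 < 1 - s by rewrite subr_gt0.
have key : (1 - s) * (D * g) <= (1 - s) * ((1 + s) * al * be * (be * p + al * q)).
  have -> : (1 - s) * (D * g) = (be ^+ 2 * (1 + s) - s * D) * g + (D - be ^+ 2 * (1 + s)) * g by ring.
  have -> : (1 - s) * ((1 + s) * al * be * (be * p + al * q)) =
     (be ^+ 2 * (1 + s) - s * D) * (al * p + s * be * q) + (D - be ^+ 2 * (1 + s)) * (s * al * p + be * q)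
    by rewrite /D; ring.
  by apply: lerD; apply: ler_wpM2l.
rewrite ler_pM2l // in key.
have Dg0 : 0 <= D * g by rewrite mulr_ge0 // ltW.
have key2 := sq_le Dg0 key.
have cs := cs2 (ltW be0) (ltW al0) p0 q0.
have hP : (be * p + al * q) ^+ 2 <= D * P.
  apply: le_trans cs _; rewrite /D addrC; apply: ler_wpM2l => //; exact: ltW.
rewrite ler_pdivlMr // -(ler_pM2l D0).
have fin : (D * g) ^+ 2 <= ((1 + s) * al * be) ^+ 2 * (D * P).
  apply: le_trans key2 _.
  have -> : ((1 + s) * al * be * (be * p + al * q)) ^+ 2 = ((1 + s) * al * be) ^+ 2 * (be * p + al * q) ^+ 2 by ring.
  apply: ler_wpM2l; first by rewrite exprn_ge0 // !mulr_ge0 // ?addr_ge0 // ltW.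
  exact: hP.
have -> : D * (g ^+ 2 * D) = (D * g) ^+ 2 by ring.
have -> : D * (P * al ^+ 2 * be ^+ 2 * (1 + s) ^+ 2) = ((1 + s) * al * be) ^+ 2 * (D * P) by ring.
exact: fin.
Qed.


Lemma ubB (R : numDomainType) (x y p q g P : R) : 0 <= x -> 0 <= y ->
  0 <= p -> 0 <= q -> p ^+ 2 + q ^+ 2 <= P ->
  0 <= g -> g <= x * p + y * q -> g ^+ 2 <= (x ^+ 2 + y ^+ 2) * P.
Proof.
move=> x0 y0 p0 q0 pq g0 gl.
have h : g ^+ 2 <= (x * p + y * q) ^+ 2 by rewrite ler_sqr ?nnegrE // (le_trans g0 gl).
apply: (le_trans h); apply: le_trans (_ : _ <= (x ^+ 2 + y ^+ 2) * (p ^+ 2 + q ^+ 2)) _.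
  rewrite -subr_ge0.
  have -> : (x ^+ 2 + y ^+ 2) * (p ^+ 2 + q ^+ 2) - (x * p + y * q) ^+ 2 = (x * q - y * p) ^+ 2 by ring.
  apply: real_exprn_even_ge0 => //; apply: realB; apply: realM; exact: ger0_real.
by apply: ler_wpM2l => //; rewrite addr_ge0 // exprn_ge0.
Qed.

Lemma minsq (R : numDomainType) (X Y : R) : 0 <= X -> 0 <= Y ->
  exists g, [/\ 0 <= g, g <= X, g <= Y & Num.min (X ^+ 2) (Y ^+ 2) = g ^+ 2].
Proof.
move=> X0 Y0; have /orP[h|h] := real_leVge (ger0_real X0) (ger0_real Y0).
  exists X; split => //; rewrite min_l //; rewrite ler_sqr ?nnegrE //.
exists Y; split => //; rewrite min_r //; rewrite ler_sqr ?nnegrE //.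
Qed.

Section Mags.
Lemma mags (C : numClosedFieldType) (A0 A1 B0 B1 l1 l2 : C) :
  0 < l1 -> 0 < l2 ->
  A0 * A0^* - B0 * B0^* = l1 -> A1 * A1^* - B1 * B1^* = - l2 ->
  A1 * A0^* - B1 * B0^* = 0 ->
  let s := sqrtC (1 - l1 / `|A0| ^+ 2) in
  [/\ 0 < `|A0|, 0 < `|B1|, 0 <= s, s < 1 &
   [/\ `|B0| = s * `|A0|, `|A1| = s * `|B1|, l1 = `|A0| ^+ 2 * (1 - s ^+ 2),
       l2 = `|B1| ^+ 2 * (1 - s ^+ 2) & 1 - s ^+ 2 = l1 / `|A0| ^+ 2]].
Proof.
move=> l10 l20 H0 H1 H01 s.
rewrite -!normCK in H0 H1.
have al0 : 0 < `|A0|.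
  rewrite lt_def normr_ge0 andbT; apply/negP => /eqP a0.
  move: H0; rewrite a0 expr0n /= sub0r => h.
  have : l1 <= 0 by rewrite -h oppr_le0 exprn_ge0.
  by move/(lt_le_trans l10); rewrite ltxx.
have als : `|A0| ^+ 2 != 0 by rewrite expf_neq0 // gt_eqF.
have sE : s = `|B0| / `|A0|.
  rewrite /s -H0.
  have -> : 1 - (`|A0| ^+ 2 - `|B0| ^+ 2) / `|A0| ^+ 2 = (`|B0| / `|A0|) ^+ 2.
    by field; rewrite gt_eqF.
  by rewrite sqrCK // divr_ge0 // ltW.
have s0 : 0 <= s by rewrite sE divr_ge0 // ltW.
have b0E : `|B0| = s * `|A0| by rewrite sE mulfVK // gt_eqF.
have N01 : `|A1| * `|A0| = `|B1| * `|B0|.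
  have : A1 * A0^* = B1 * B0^* by apply/eqP; rewrite -subr_eq0 H01.
  by move/(congr1 (fun z => `|z|)); rewrite !normrM !norm_conjC.
have a1E : `|A1| = s * `|B1|.
  apply: (mulIf (lt0r_neq0 al0)); rewrite N01 b0E; ring.
have l1E : l1 = `|A0| ^+ 2 * (1 - s ^+ 2) by rewrite -H0 b0E; ring.
have l2E : l2 = `|B1| ^+ 2 * (1 - s ^+ 2).
  by apply: oppr_inj; rewrite -H1 a1E; ring.
have c2E : 1 - s ^+ 2 = l1 / `|A0| ^+ 2 by rewrite l1E; field; rewrite gt_eqF.
have c20 : 0 < 1 - s ^+ 2 by rewrite c2E divr_gt0 // exprn_gt0.
have be0 : 0 < `|B1|.
  rewrite lt_def normr_ge0 andbT; apply/negP => /eqP b1.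
  by move: l20; rewrite l2E b1 expr0n /= mul0r ltxx.
have s1 : s < 1.
  rewrite -(ltr_sqr) ?nnegrE // expr1n; by rewrite subr_gt0 in c20.
by split.
Qed.
End Mags.


Lemma phase_norm (C : numClosedFieldType) (z : C) : z != 0 -> `|phase z| = 1.
Proof. by move=> z0; rewrite /phase normrM normrV ?unitfE ?normr_eq0 // normr_id mulfV // normr_eq0. Qed.

Lemma phaseE (C : numClosedFieldType) (z : C) : z != 0 -> z = `|z| * phase z.
Proof. by move=> z0; rewrite /phase mulrC mulfVK // normr_eq0. Qed.

Lemma conj_nn (C : numClosedFieldType) (r z : C) : 0 <= r -> (r * z)^* = r * z^*.
Proof. by move=> r0; rewrite rmorphM /= geC0_conj. Qed.

Lemma unit_inv (C : numClosedFieldType) (e : C) : `|e| = 1 -> e^-1 = e^*.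
Proof. by move=> e1; rewrite invC_norm e1 expr1n invr1 mul1r. Qed.

Lemma unit_neq0 (C : numClosedFieldType) (e : C) : `|e| = 1 -> e != 0.
Proof. by move=> e1; apply/negP => /eqP e0; move: e1; rewrite e0 normr0 => /eqP; rewrite eq_sym oner_eq0. Qed.

Lemma phases (C : numClosedFieldType) (A0 A1 B0 B1 ea : C) :
  A0 != 0 -> B1 != 0 -> `|ea| = 1 ->
  A1 * A0^* - B1 * B0^* = 0 ->
  (B0 != 0 -> ea = phase B0 / phase B1) ->
  A1 * ea = `|A1| * phase A0 /\ B0 = `|B0| * phase B1 * ea.
Proof.
move=> A00 B10 e1 H01 hea.
have H : A1 * A0^* = B1 * B0^* by apply/eqP; rewrite -subr_eq0 H01.
have N : `|A1| * `|A0| = `|B1| * `|B0|.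
  by move/(congr1 (fun z => `|z|)): H; rewrite !normrM !norm_conjC.
have nA0 : `|A0| != 0 by rewrite normr_eq0.
have nB1 : `|B1| != 0 by rewrite normr_eq0.
have [B00|B00] := eqVneq B0 0.
  have A10 : A1 = 0.
    by move: H; rewrite B00 conjC0 mulr0 => /eqP; rewrite mulf_eq0 conjC_eq0 (negbTE A00) orbF => /eqP.
  by rewrite A10 B00 normr0 !mul0r.
have nB0 : `|B0| != 0 by rewrite normr_eq0.
rewrite (hea B00) /phase; split.
  have A1E : A1 = B1 * B0^* / A0^* by rewrite -H mulfK // conjC_eq0.
  have -> : `|A1| = `|B1| * `|B0| / `|A0| by rewrite -N mulfK.
  rewrite A1E.
  have hA : A0^* = `|A0| ^+ 2 / A0 by rewrite normCK; field.
  have hB : B0^* = `|B0| ^+ 2 / B0 by rewrite normCK; field.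
  rewrite hA hB; field.
  by rewrite A00 B00 B10 nA0 nB0 nB1.
field; by rewrite B10 nB0 nB1.
Qed.

Lemma inner_vals (C : numClosedFieldType) (A0 A1 B0 B1 ea w0 x y : C) :
  A0 != 0 -> B1 != 0 -> `|ea| = 1 -> `|w0| = 1 -> 0 <= x -> 0 <= y ->
  A1 * ea = `|A1| * phase A0 -> B0 = `|B0| * phase B1 * ea ->
  `|A0^* * (x * w0) + A1^* * (y * (w0 / ea))| = `|A0| * x + `|A1| * y /\
  `|B0^* * (x * w0) + B1^* * (y * (w0 / ea))| = `|B0| * x + `|B1| * y.
Proof.
move=> A00 B10 e1 w1 x0 y0 P1 P2.
have ie := unit_inv e1.
have e0 := unit_neq0 e1.
have ph1 := phase_norm A00.
have B10' := phase_norm B10.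
have A1E : A1 = `|A1| * phase A0 * ea^* by rewrite -P1 -ie mulfK.
have cA0 : A0^* = `|A0| * (phase A0)^* by rewrite {1}(phaseE A00) conj_nn.
have cA1 : A1^* = `|A1| * (phase A0)^* * ea.
  by rewrite {1}A1E -mulrA conj_nn // rmorphM /= conjCK mulrA.
have cB1 : B1^* = `|B1| * (phase B1)^* by rewrite {1}(phaseE B10) conj_nn.
have cB0 : B0^* = `|B0| * (phase B1)^* * ea^*.
  by rewrite {1}P2 -mulrA conj_nn // rmorphM /= mulrA.
split.
  rewrite cA0 cA1.
  have -> : `|A0| * (phase A0)^* * (x * w0) + `|A1| * (phase A0)^* * ea * (y * (w0 / ea))
     = ((phase A0)^* * w0) * (`|A0| * x + `|A1| * y) by field.
  by rewrite normrM normrM norm_conjC ph1 w1 !mul1r ger0_norm // addr_ge0 // mulr_ge0.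
rewrite cB0 cB1 -ie.
have -> : `|B0| * (phase B1)^* * ea^-1 * (x * w0) + `|B1| * (phase B1)^* * (y * (w0 / ea))
   = ((phase B1)^* * w0 * ea^-1) * (`|B0| * x + `|B1| * y) by field.
by rewrite !normrM norm_conjC B10' w1 normrV ?unitfE // e1 invr1 !mul1r ger0_norm // addr_ge0 // mulr_ge0.
Qed.


Lemma innerE (C : numClosedFieldType) M (x y : 'cV[C]_M) :
  inner x y = \sum_i (x i 0)^* * y i 0.
Proof. by rewrite /inner mxE; apply: eq_bigr => i _; rewrite !mxE. Qed.

Lemma tC_mul (C : numClosedFieldType) m n p (A : 'M[C]_(m, n)) (B : 'M[C]_(n, p)) :
  (A *m B) ^t* = B ^t* *m A ^t*.
Proof. by rewrite trmx_mul map_mxM. Qed.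

Lemma inner_mulV (C : numClosedFieldType) M (V : 'M[C]_M) (h u : 'cV[C]_M) :
  inner h (V *m u) = inner (V ^t* *m h) u.
Proof. by rewrite /inner tC_mul trmxCK mulmxA. Qed.

Lemma unit_l (C : numClosedFieldType) M (V : 'M[C]_M) : V \is unitarymx -> V ^t* *m V = 1%:M.
Proof. by move/unitarymxP/mulmx1C. Qed.

Lemma inner_rot (C : numClosedFieldType) M (V : 'M[C]_M) (h w : 'cV[C]_M) :
  V \is unitarymx -> inner h w = inner (V ^t* *m h) (V ^t* *m w).
Proof. by move=> /unitarymxP U; rewrite -inner_mulV mulmxA U mul1mx. Qed.

Lemma outerE (C : numClosedFieldType) M (x y : 'cV[C]_M) i j :
  (x *m y ^t*) i j = x i 0 * (y j 0)^*.
Proof. by rewrite mxE big_ord1 !mxE. Qed.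

Lemma sigma_rot (C : numClosedFieldType) M (V S : 'M[C]_M) (h1 h2 : 'cV[C]_M) :
  V \is unitarymx -> h1 *m h1 ^t* - h2 *m h2 ^t* = V *m S *m V ^t* ->
  (V ^t* *m h1) *m (V ^t* *m h1) ^t* - (V ^t* *m h2) *m (V ^t* *m h2) ^t* = S.
Proof.
move=> U E; have U' := unit_l U.
rewrite !tC_mul !trmxCK.
have -> : V ^t* *m h1 *m (h1 ^t* *m V) - V ^t* *m h2 *m (h2 ^t* *m V) =
   V ^t* *m (h1 *m h1 ^t* - h2 *m h2 ^t*) *m V.
  by rewrite mulmxBr mulmxBl !mulmxA.
by rewrite E !mulmxA U' mul1mx -!mulmxA U' mulmx1.
Qed.

Lemma inner2 (C : numClosedFieldType) M (i0 i1 : 'I_M) (x y : 'cV[C]_M) :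
  i0 != i1 -> (forall k, k != i0 -> k != i1 -> (x k 0)^* * y k 0 = 0) ->
  inner x y = (x i0 0)^* * y i0 0 + (x i1 0)^* * y i1 0.
Proof.
move=> ne H; rewrite innerE (bigD1 i0) //= (bigD1 i1) /=; last by rewrite eq_sym.
rewrite big1 ?addr0 // => k /andP[k1 k0]; exact: H.
Qed.

Lemma inner_self_ge (C : numClosedFieldType) M (i0 i1 : 'I_M) (u : 'cV[C]_M) :
  i0 != i1 -> `|u i0 0| ^+ 2 + `|u i1 0| ^+ 2 <= inner u u.
Proof.
move=> ne; rewrite innerE (bigD1 i0) //= (bigD1 i1) /=; last by rewrite eq_sym.
rewrite addrA !normCKC lerDl; apply: sumr_ge0 => k _; rewrite -normCKC exprn_ge0 //.
Qed.

Lemma vec2E (C : numClosedFieldType) M (i0 i1 : 'I_M) (a b : C) k :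
  vec2 i0 i1 a b k 0 = if k == i0 then a else if k == i1 then b else 0.
Proof. by rewrite mxE. Qed.

Lemma sigmaE (C : numClosedFieldType) M (i0 i1 : 'I_M) (l1 l2 : C) i j :
  Sigma i0 i1 l1 l2 i j = (if i == i0 then l1 else if i == i1 then - l2 else 0) *+ (i == j).
Proof. by rewrite mxE mxE. Qed.

Lemma vanish (C : numClosedFieldType) M (i0 i1 : 'I_M) (a b : 'cV[C]_M) (l1 l2 : C) :
  0 < l1 -> i0 != i1 ->
  (forall i j, a i 0 * (a j 0)^* - b i 0 * (b j 0)^* = Sigma i0 i1 l1 l2 i j) ->
  forall k, k != i0 -> k != i1 -> a k 0 = 0 /\ b k 0 = 0.
Proof.
move=> l10 ne E k k0 k1.
have Ekk := E k k; rewrite sigmaE (negbTE k0) (negbTE k1) mul0rn -!normCK in Ekk.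
have Ek0 := E k i0; rewrite sigmaE (negbTE k0) mulr0n in Ek0.
have E00 := E i0 i0; rewrite sigmaE eqxx mulr1n -!normCK in E00.
have nk : `|a k 0| = `|b k 0|.
  by apply/eqP; rewrite -(eqrXn2 (n:=2)) // -subr_eq0 Ekk.
have N : `|a k 0| * `|a i0 0| = `|b k 0| * `|b i0 0|.
  have : a k 0 * (a i0 0)^* = b k 0 * (b i0 0)^* by apply/eqP; rewrite -subr_eq0 Ek0.
  by move/(congr1 (fun z => `|z|)); rewrite !normrM !norm_conjC.
have ak : a k 0 = 0.
  apply/eqP; apply/negP => ak0.
  have nak : `|a k 0| != 0 by rewrite normr_eq0; apply/negP.
  move: N; rewrite -nk => /(mulfI nak) N.
  by move: l10; rewrite -E00 N subrr ltxx.
split => //; apply/eqP; rewrite -normr_eq0 -nk ak normr0 //.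
Qed.

Lemma inner_ge0 (C : numClosedFieldType) M (x : 'cV[C]_M) : 0 <= inner x x.
Proof. by rewrite innerE; apply: sumr_ge0 => i _; rewrite -normCKC exprn_ge0. Qed.

Lemma innerC (C : numClosedFieldType) M (x y : 'cV[C]_M) : inner y x = (inner x y)^*.
Proof. by rewrite !innerE rmorph_sum; apply: eq_bigr => i _; rewrite rmorphM /= conjCK mulrC. Qed.

Lemma innerZl (C : numClosedFieldType) M (a : C) (x y : 'cV[C]_M) : inner (a *: x) y = a^* * inner x y.
Proof. by rewrite !innerE mulr_sumr; apply: eq_bigr => i _; rewrite mxE rmorphM mulrA. Qed.

Lemma innerZr (C : numClosedFieldType) M (a : C) (x y : 'cV[C]_M) : inner x (a *: y) = a * inner x y.
Proof. by rewrite !innerE mulr_sumr; apply: eq_bigr => i _; rewrite mxE mulrCA. Qed.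

Lemma inner_exp (C : numClosedFieldType) M (a b : C) (x y : 'cV[C]_M) :
  inner (a *: x + b *: y) (a *: x + b *: y) =
  a^* * a * inner x x + b^* * b * inner y y + a^* * b * inner x y + b^* * a * inner y x.
Proof.
rewrite !innerE !mulr_sumr -!big_split /=; apply: eq_bigr => i _.
rewrite !mxE rmorphD !rmorphM /=; ring.
Qed.

Lemma norm2_real (C : numClosedFieldType) M (x : 'cV[C]_M) : (inner x x)^* = inner x x.
Proof. by rewrite geC0_conj // inner_ge0. Qed.

Lemma CS (C : numClosedFieldType) M (h w : 'cV[C]_M) :
  `|inner h w| ^+ 2 <= inner h h * inner w w.
Proof.
have [h0|h0] := eqVneq h 0.
  have z0 : forall y : 'cV[C]_M, inner 0 y = 0 by move=> y; rewrite innerE big1 // => i _; rewrite mxE conjC0 mul0r.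
  by rewrite h0 !z0 normr0 expr0n mul0r.
set n := inner h h; set z := inner h w.
have n0 : 0 < n.
  rewrite lt_def inner_ge0 andbT /n innerE psumr_eq0; last by move=> i _; rewrite -normCKC exprn_ge0.
  apply/negP => /allP H; move/negP: h0; apply; apply/eqP/matrixP => i j.
  rewrite (ord1 j) mxE; have := H i (mem_index_enum _); rewrite implyTb -normCKC.
  by rewrite expf_eq0 /= normr_eq0 => /eqP.
have := inner_ge0 (n *: w + (- z) *: h); rewrite inner_exp.
have nc : n^* = n by rewrite norm2_real.
rewrite nc -/n (innerC h w) -/z rmorphN /= normCK.
have -> : n * n * inner w w + - z^* * - z * n + n * - z * z^* + - z^* * n * z =
          n * (n * inner w w - z * z^*) by ring.
by rewrite pmulr_rge0 // subr_ge0 mulrC.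
Qed.
Lemma outer_sub (C : numClosedFieldType) M (x y : 'cV[C]_M) i j :
  (x *m x ^t* - y *m y ^t*) i j = x i 0 * (x j 0)^* - y i 0 * (y j 0)^*.
Proof. by rewrite mxE [X in _ + X]mxE !outerE. Qed.


Section Core.
Variables (C : numClosedFieldType) (A0 A1 B0 B1 l1 l2 P ea : C).
Hypotheses (l10 : 0 < l1) (l20 : 0 < l2) (P0 : 0 < P)
  (H0 : A0 * A0^* - B0 * B0^* = l1) (H1 : A1 * A1^* - B1 * B1^* = - l2)
  (H01 : A1 * A0^* - B1 * B0^* = 0) (e1 : `|ea| = 1)
  (hea : B0 != 0 -> ea = phase B0 / phase B1).

Definition F u0 u1 := Num.min (`|A0^* * u0 + A1^* * u1| ^+ 2) (`|B0^* * u0 + B1^* * u1| ^+ 2).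
Definition G X Y v := [/\ `|X| ^+ 2 + `|Y| ^+ 2 = P, F X Y = v &
   forall u0 u1, `|u0| ^+ 2 + `|u1| ^+ 2 <= P -> F u0 u1 <= v].

Lemma setup : let s := sqrtC (1 - l1 / `|A0| ^+ 2) in
  [/\ 0 < `|A0|, 0 < `|B1|, 0 <= s, s < 1 &
   [/\ `|B0| = s * `|A0|, `|A1| = s * `|B1|, l1 = `|A0| ^+ 2 * (1 - s ^+ 2),
       l2 = `|B1| ^+ 2 * (1 - s ^+ 2) & 1 - s ^+ 2 = l1 / `|A0| ^+ 2]].
Proof. exact: mags. Qed.

Lemma upper u0 u1 : `|u0| ^+ 2 + `|u1| ^+ 2 <= P ->
  let s := sqrtC (1 - l1 / `|A0| ^+ 2) in
  exists p q g, [/\ 0 <= p, 0 <= q, p ^+ 2 + q ^+ 2 <= P, 0 <= g &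
    [/\ g <= `|A0| * p + s * `|B1| * q, g <= s * `|A0| * p + `|B1| * q & F u0 u1 = g ^+ 2]].
Proof.
move=> hP s; have [al0 be0 s0 s1 [b0E a1E l1E l2E cE]] := setup.
have [g [g0 ga gb gE]] := minsq (normr_ge0 (A0^* * u0 + A1^* * u1)) (normr_ge0 (B0^* * u0 + B1^* * u1)).
exists `|u0|, `|u1|, g; split => //; split => //.
- apply: le_trans ga _; apply: le_trans (ler_normD _ _) _.
  by rewrite !normrM !norm_conjC a1E ?mulrA.
- apply: le_trans gb _; apply: le_trans (ler_normD _ _) _.
  by rewrite !normrM !norm_conjC b0E ?mulrA.
Qed.

Lemma attain w0 x y : `|w0| = 1 -> 0 <= x -> 0 <= y ->
  let s := sqrtC (1 - l1 / `|A0| ^+ 2) in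
  `|x * w0| ^+ 2 + `|y * (w0 / ea)| ^+ 2 = x ^+ 2 + y ^+ 2 /\
  F (x * w0) (y * (w0 / ea)) =
    Num.min ((`|A0| * x + s * `|B1| * y) ^+ 2) ((s * `|A0| * x + `|B1| * y) ^+ 2).
Proof.
move=> w1 x0 y0 s; have [al0 be0 s0 s1 [b0E a1E l1E l2E cE]] := setup.
have A00 : A0 != 0 by rewrite -normr_eq0 gt_eqF.
have B10 : B1 != 0 by rewrite -normr_eq0 gt_eqF.
have [P1 P2] := phases A00 B10 e1 H01 hea.
have [va vb] := inner_vals A00 B10 e1 w1 x0 y0 P1 P2.
split.
  by rewrite !normrM w1 normrV ?unitfE ?unit_neq0 // e1 invr1 !mulr1 !ger0_norm.
by rewrite /F va vb a1E b0E ?mulrA.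
Qed.

Notation sS := (sqrtC (1 - l1 / `|A0| ^+ 2)).

Lemma caseA w0 : `|w0| = 1 -> sS * l1 <= l2 -> sS * l2 <= l1 ->
  G (sqrtC (P * l2 / (l1 + l2)) * w0) (sqrtC (P * l1 / (l1 + l2)) * (w0 / ea))
    (P * l1 * l2 / (l1 + l2) * ((1 + sS) ^+ 2 / (l1 / `|A0| ^+ 2))).
Proof.
move=> w1 c1 c2.
have [al0 be0 s0 s1 [b0E a1E l1E l2E cE]] := setup.
have UP := upper.
have AT := attain w1.
move: c1 c2 b0E a1E l1E l2E cE UP AT.
set s := sS; set al := `|A0|; set be := `|B1|.
move=> c1 c2 b0E a1E l1E l2E cE UP AT.
rewrite -cE.
have c0 : 0 < 1 - s ^+ 2 by rewrite subr_gt0 -(expr1n _ 2) ltr_sqr ?nnegrE.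
set D := al ^+ 2 + be ^+ 2.
have D0 : 0 < D by rewrite addr_gt0 // exprn_gt0.
have Dn : al ^+ 2 + be ^+ 2 != 0 by rewrite gt_eqF.
have cn : 1 - s ^+ 2 != 0 by rewrite gt_eqF.
have Dc : al ^+ 2 * (1 - s ^+ 2) + be ^+ 2 * (1 - s ^+ 2) != 0 by rewrite -mulrDl mulf_neq0.
set r := sqrtC (P / D).
have r0 : 0 <= r by rewrite sqrtC_ge0 divr_ge0 // ltW.
have r2 : r ^+ 2 = P / D by rewrite sqrtCK.
have hx : sqrtC (P * l2 / (l1 + l2)) = be * r.
  have -> : P * l2 / (l1 + l2) = (be * r) ^+ 2.
    rewrite exprMn r2 l1E l2E /D; field.
    by rewrite ?Dn ?cn ?Dc.
  by rewrite sqrCK // mulr_ge0 // ltW.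
have hy : sqrtC (P * l1 / (l1 + l2)) = al * r.
  have -> : P * l1 / (l1 + l2) = (al * r) ^+ 2.
    rewrite exprMn r2 l1E l2E /D; field.
    by rewrite ?Dn ?cn ?Dc.
  by rewrite sqrCK // mulr_ge0 // ltW.
have v_eq : P * l1 * l2 / (l1 + l2) * ((1 + s) ^+ 2 / (1 - s ^+ 2)) = P * al ^+ 2 * be ^+ 2 * (1 + s) ^+ 2 / D.
  rewrite l1E l2E /D; field.
  by rewrite ?Dn ?cn ?Dc.
rewrite hx hy v_eq.
have [nE fE] := AT (be * r) (al * r) (mulr_ge0 (ltW be0) r0) (mulr_ge0 (ltW al0) r0).
split.
- by rewrite nE !exprMn r2 /D; field; rewrite ?Dn ?cn ?Dc.
- rewrite fE.
  have e1' : (al * (be * r) + s * be * (al * r)) ^+ 2 = P * al ^+ 2 * be ^+ 2 * (1 + s) ^+ 2 / D.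
    have -> : al * (be * r) + s * be * (al * r) = (1 + s) * al * be * r by ring.
    by rewrite !exprMn r2 mulrA; field; rewrite ?Dn ?cn ?Dc.
  have e2' : (s * al * (be * r) + be * (al * r)) ^+ 2 = P * al ^+ 2 * be ^+ 2 * (1 + s) ^+ 2 / D.
    have -> : s * al * (be * r) + be * (al * r) = (1 + s) * al * be * r by ring.
    by rewrite !exprMn r2 mulrA; field; rewrite ?Dn ?cn ?Dc.
  by rewrite e1' e2' minxx.
move=> u0 u1 hu; have [p [q [g [p0 q0 pq g0 [ga gb ->]]]]] := UP u0 u1 hu.
apply: (ubA al0 be0 s0 s1 _ _ p0 q0 pq g0 ga gb).
  by rewrite -(ler_pM2r c0) -mulrA -l1E -l2E.
by rewrite -(ler_pM2r c0) -mulrA -l1E -l2E.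
Qed.

Lemma caseB1 w0 : `|w0| = 1 -> l1 < sS * l2 ->
  G (sqrtC (P * l1 / (l1 + l2 * sS ^+ 2)) * w0)
    (sqrtC (P * l2 * sS ^+ 2 / (l1 + l2 * sS ^+ 2)) * (w0 / ea))
    (P * (l1 + l2 * sS ^+ 2) / (l1 / `|A0| ^+ 2)).
Proof.
move=> w1 c1.
have [al0 be0 s0 s1 [b0E a1E l1E l2E cE]] := setup.
have UP := upper.
have AT := attain w1.
move: c1 b0E a1E l1E l2E cE UP AT.
set s := sS; set al := `|A0|; set be := `|B1|.
move=> c1 b0E a1E l1E l2E cE UP AT.
rewrite -cE.
have c0 : 0 < 1 - s ^+ 2 by rewrite subr_gt0 -(expr1n _ 2) ltr_sqr ?nnegrE.
have cn : 1 - s ^+ 2 != 0 by rewrite gt_eqF.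
set E := al ^+ 2 + s ^+ 2 * be ^+ 2.
have E0 : 0 < E.
  rewrite /E; apply: lt_le_trans (_ : 0 < al ^+ 2) _; first exact: exprn_gt0.
  by rewrite lerDl mulr_ge0 ?exprn_ge0 // ltW.
have En : E != 0 by rewrite gt_eqF.
have dE : l1 + l2 * s ^+ 2 = (1 - s ^+ 2) * E by rewrite l1E l2E /E; ring.
set r := sqrtC (P / E).
have r0 : 0 <= r by rewrite sqrtC_ge0 divr_ge0 // ltW.
have r2 : r ^+ 2 = P / E by rewrite sqrtCK.
have hx : sqrtC (P * l1 / (l1 + l2 * s ^+ 2)) = al * r.
  have -> : P * l1 / (l1 + l2 * s ^+ 2) = (al * r) ^+ 2.
    by rewrite dE exprMn r2 l1E; field; rewrite ?cn ?En.
  by rewrite sqrCK // mulr_ge0 // ltW.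
have sbr : 0 <= s * be * r by rewrite !mulr_ge0 // ltW.
have hy : sqrtC (P * l2 * s ^+ 2 / (l1 + l2 * s ^+ 2)) = s * be * r.
  have -> : P * l2 * s ^+ 2 / (l1 + l2 * s ^+ 2) = (s * be * r) ^+ 2.
    by rewrite dE !exprMn r2 l2E; field; rewrite ?cn ?En.
  by rewrite sqrCK.
have v_eq : P * (l1 + l2 * s ^+ 2) / (1 - s ^+ 2) = P * E.
  by rewrite dE; field; rewrite ?cn.
rewrite hx hy v_eq.
have [nE fE] := AT (al * r) (s * be * r) (mulr_ge0 (ltW al0) r0) sbr.
have aE : (al * (al * r) + s * be * (s * be * r)) ^+ 2 = P * E.
  have -> : al * (al * r) + s * be * (s * be * r) = E * r by rewrite /E; ring.
  by rewrite exprMn r2; field; rewrite ?En.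
split.
- by rewrite nE !exprMn r2 /E; field; rewrite exprMn -/E.
- rewrite fE aE min_l //.
  have xa : 0 <= al * (al * r) + s * be * (s * be * r) by rewrite addr_ge0 ?mulr_ge0 // ltW.
  have xb : 0 <= s * al * (al * r) + be * (s * be * r) by rewrite addr_ge0 ?mulr_ge0 // ltW.
  rewrite -aE ler_sqr ?nnegrE //.
  have -> : al * (al * r) + s * be * (s * be * r) = E * r by rewrite /E; ring.
  have -> : s * al * (al * r) + be * (s * be * r) = (s * (al ^+ 2 + be ^+ 2)) * r by ring.
  apply: ler_wpM2r => //; rewrite -subr_ge0.
  have -> : s * (al ^+ 2 + be ^+ 2) - E = (1 - s) * (s * be ^+ 2 - al ^+ 2) by rewrite /E; ring.
  apply: mulr_ge0; first by rewrite subr_ge0 ltW.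
  by rewrite subr_ge0 ltW //; rewrite -(ltr_pM2r c0) -l1E -mulrA -l2E.
move=> u0 u1 hu; have [p [q [g [p0 q0 pq g0 [ga gb ->]]]]] := UP u0 u1 hu.
have := ubB (ltW al0) (mulr_ge0 s0 (ltW be0)) p0 q0 pq g0 ga.
by rewrite exprMn mulrC.
Qed.

Lemma caseB2 w0 : `|w0| = 1 -> l2 < sS * l1 ->
  G (sqrtC (P * l1 / (l1 + l2 / sS ^+ 2)) * w0)
    (sqrtC (P * l2 / (l1 * sS ^+ 2 + l2)) * (w0 / ea))
    (P * (l1 * sS ^+ 2 + l2) / (l1 / `|A0| ^+ 2)).
Proof.
move=> w1 c1.
have [al0 be0 s0 s1 [b0E a1E l1E l2E cE]] := setup.
have UP := upper.
have AT := attain w1.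
move: c1 b0E a1E l1E l2E cE UP AT.
set s := sS; set al := `|A0|; set be := `|B1|.
move=> c1 b0E a1E l1E l2E cE UP AT.
rewrite -cE.
have c0 : 0 < 1 - s ^+ 2 by rewrite subr_gt0 -(expr1n _ 2) ltr_sqr ?nnegrE.
have cn : 1 - s ^+ 2 != 0 by rewrite gt_eqF.
have sn : s != 0.
  apply/negP => /eqP s00; move: c1; rewrite s00 mul0r => h.
  by move: (lt_trans l20 h); rewrite ltxx.
set E := s ^+ 2 * al ^+ 2 + be ^+ 2.
have E0 : 0 < E.
  rewrite /E; apply: lt_le_trans (_ : 0 < be ^+ 2) _; first exact: exprn_gt0.
  by rewrite lerDr mulr_ge0 ?exprn_ge0 // ltW.
have En : E != 0 by rewrite gt_eqF.
have s2n : s ^+ 2 != 0 by rewrite expf_neq0.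
have dE1 : l1 + l2 / s ^+ 2 = (1 - s ^+ 2) * E / s ^+ 2 by rewrite l1E l2E /E; field.
have dE2 : l1 * s ^+ 2 + l2 = (1 - s ^+ 2) * E by rewrite l1E l2E /E; ring.
set r := sqrtC (P / E).
have r0 : 0 <= r by rewrite sqrtC_ge0 divr_ge0 // ltW.
have r2 : r ^+ 2 = P / E by rewrite sqrtCK.
have sar : 0 <= s * al * r by rewrite !mulr_ge0 // ltW.
have hx : sqrtC (P * l1 / (l1 + l2 / s ^+ 2)) = s * al * r.
  have -> : P * l1 / (l1 + l2 / s ^+ 2) = (s * al * r) ^+ 2.
    by rewrite dE1 !exprMn r2 l1E; field; rewrite ?cn ?En ?sn.
  by rewrite sqrCK.
have hy : sqrtC (P * l2 / (l1 * s ^+ 2 + l2)) = be * r.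
  have -> : P * l2 / (l1 * s ^+ 2 + l2) = (be * r) ^+ 2.
    by rewrite dE2 exprMn r2 l2E; field; rewrite ?cn ?En.
  by rewrite sqrCK // mulr_ge0 // ltW.
have v_eq : P * (l1 * s ^+ 2 + l2) / (1 - s ^+ 2) = P * E.
  by rewrite dE2; field; rewrite ?cn.
rewrite hx hy v_eq.
have [nE fE] := AT (s * al * r) (be * r) sar (mulr_ge0 (ltW be0) r0).
have bE : (s * al * (s * al * r) + be * (be * r)) ^+ 2 = P * E.
  have -> : s * al * (s * al * r) + be * (be * r) = E * r by rewrite /E; ring.
  by rewrite exprMn r2; field; rewrite ?En.
split.
- by rewrite nE !exprMn r2 /E; field; rewrite exprMn -/E.
- rewrite fE bE min_r //.
  have xa : 0 <= al * (s * al * r) + s * be * (be * r) by rewrite addr_ge0 ?mulr_ge0 // ltW.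
  have xb : 0 <= s * al * (s * al * r) + be * (be * r) by rewrite addr_ge0 ?mulr_ge0 // ltW.
  rewrite -bE ler_sqr ?nnegrE //.
  have -> : s * al * (s * al * r) + be * (be * r) = E * r by rewrite /E; ring.
  have -> : al * (s * al * r) + s * be * (be * r) = (s * (al ^+ 2 + be ^+ 2)) * r by ring.
  apply: ler_wpM2r => //; rewrite -subr_ge0.
  have -> : s * (al ^+ 2 + be ^+ 2) - E = (1 - s) * (s * al ^+ 2 - be ^+ 2) by rewrite /E; ring.
  apply: mulr_ge0; first by rewrite subr_ge0 ltW.
  by rewrite subr_ge0 ltW //; rewrite -(ltr_pM2r c0) -l2E -mulrA -l1E.
move=> u0 u1 hu; have [p [q [g [p0 q0 pq g0 [ga gb ->]]]]] := UP u0 u1 hu.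
have := ubB (mulr_ge0 s0 (ltW al0)) (ltW be0) p0 q0 pq g0 gb.
by rewrite exprMn mulrC.
Qed.
End Core.



Lemma min_le_l (R : numDomainType) (x y : R) : x \is Num.real -> y \is Num.real ->
  Num.min x y <= x /\ Num.min x y <= y.
Proof.
move=> xr yr; have /orP[h|h] := real_leVge xr yr.
  by rewrite min_l.
by rewrite min_r.
Qed.

Lemma min_mono (R : numDomainType) (x1 x2 y1 y2 : R) :
  x1 \is Num.real -> x2 \is Num.real -> y1 \is Num.real -> y2 \is Num.real ->
  x1 <= y1 -> x2 <= y2 -> Num.min x1 x2 <= Num.min y1 y2.
Proof.
move=> r1 r2 r3 r4 h1 h2; have [m1 m2] := min_le_l r1 r2.
have /orP[h|h] := real_leVge r3 r4.
  by rewrite (min_l h); apply: le_trans m1 h1.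
by rewrite (min_r h); apply: le_trans m2 h2.
Qed.

Lemma inner_pos (C : numClosedFieldType) M (h : 'cV[C]_M) : h != 0 -> 0 < inner h h.
Proof.
move=> h0; rewrite lt_def inner_ge0 andbT innerE psumr_eq0; last by move=> i _; rewrite -normCKC exprn_ge0.
apply/negP => /allP H; move/negP: h0; apply; apply/eqP/matrixP => i j.
rewrite (ord1 j) mxE; have := H i (mem_index_enum _); rewrite implyTb -normCKC.
by rewrite expf_eq0 /= normr_eq0 => /eqP.
Qed.

Lemma scaled (C : numClosedFieldType) M (x : 'cV[C]_M) (P : C) : x != 0 -> 0 < P ->
  let k := sqrtC P / sqrtC (inner x x) in
  inner (k *: x) (k *: x) = P /\
  forall y, `|inner y (k *: x)| ^+ 2 = P * `|inner y x| ^+ 2 / inner x x.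
Proof.
move=> x0 P0 k; have n0 := inner_pos x0.
have k0 : 0 <= k by rewrite divr_ge0 // sqrtC_ge0 ltW.
have k2 : k ^+ 2 = P / inner x x by rewrite expr_div_n !sqrtCK.
split.
  by rewrite innerZl innerZr geC0_conj // mulrA -expr2 k2 mulfVK // gt_eqF.
by move=> y; rewrite innerZr normrM exprMn ger0_norm // k2 mulrAC.
Qed.

Lemma scen1 (C : numClosedFieldType) M (h1 h2 : 'cV[C]_M) (P tau : C) :
  h1 != 0 -> h2 != 0 -> 0 < P -> h1 = tau *: h2 ->
  let vmax := Num.min (P * norm2 h1) (P * norm2 h2) in
  is_max_at h1 h2 P ((sqrtC P / sqrtC (norm2 h2)) *: h2) vmax /\
  is_max_at h1 h2 P ((sqrtC P / sqrtC (norm2 h1)) *: h1) vmax.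
Proof.
move=> h10 h20 P0 ht vmax; rewrite /vmax /norm2.
have n1p := inner_pos h10; have n2p := inner_pos h20.
have nz1 : inner h1 h1 != 0 by rewrite gt_eqF.
have nz2 : inner h2 h2 != 0 by rewrite gt_eqF.
have n1r : (inner h1 h1) \is Num.real by rewrite ger0_real // ltW.
have n2r : (inner h2 h2) \is Num.real by rewrite ger0_real // ltW.
have t0 : tau != 0 by apply/negP => /eqP t0; move: h10; rewrite ht t0 scale0r eqxx.
have n1E : inner h1 h1 = `|tau| ^+ 2 * inner h2 h2 by rewrite ht innerZl innerZr mulrA normCKC.
have i12 : inner h1 h2 = tau^* * inner h2 h2 by rewrite ht innerZl.
have i21 : inner h2 h1 = tau * inner h2 h2 by rewrite ht innerZr.
have UB : forall w', inner w' w' = P -> fobj h1 h2 w' <= Num.min (P * inner h1 h1) (P * inner h2 h2).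
  move=> w' hw; rewrite /fobj; apply: min_mono.
  - exact: ger0_real (exprn_ge0 _ (normr_ge0 _)).
  - exact: ger0_real (exprn_ge0 _ (normr_ge0 _)).
  - by rewrite realM // ger0_real // ltW.
  - by rewrite realM // ger0_real // ltW.
  - by rewrite -hw mulrC; apply: CS.
  - by rewrite -hw mulrC; apply: CS.
have [nw2 vw2] := scaled h20 P0.
have [nw1 vw1] := scaled h10 P0.
have tn : `|tau| != 0 by rewrite normr_eq0.
split; split => //.
- rewrite /fobj !vw2 i12 normrM norm_conjC (ger0_norm (ltW n2p)) n1E; congr Num.min; by field; rewrite ?nz1 ?nz2.
- rewrite /fobj !vw1 i21 normrM (ger0_norm (ltW n1p)) n1E (ger0_norm (ltW n2p)); congr Num.min.
    by field; rewrite ?nz1 ?nz2 ?tn.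
  by field; rewrite ?nz1 ?nz2 ?tn.
Qed.


Lemma bridge (C : numClosedFieldType) M (h1 h2 : 'cV[C]_M) (V : 'M[C]_M) (l1 l2 P : C) (i0 i1 : 'I_M) :
  i0 != i1 -> V \is unitarymx -> 0 < l1 ->
  h1 *m h1 ^t* - h2 *m h2 ^t* = V *m Sigma i0 i1 l1 l2 *m V ^t* ->
  forall X Y v, G ((V ^t* *m h1) i0 0) ((V ^t* *m h1) i1 0) ((V ^t* *m h2) i0 0) ((V ^t* *m h2) i1 0) P X Y v ->
  is_max_at h1 h2 P (V *m vec2 i0 i1 X Y) v.
Proof.
move=> ne U l10 E X Y v [nE fE ub].
have Hs := sigma_rot U E.
set a := V ^t* *m h1 in Hs *; set b := V ^t* *m h2 in Hs *.
have Eo : forall i j, a i 0 * (a j 0)^* - b i 0 * (b j 0)^* = Sigma i0 i1 l1 l2 i j.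
  move=> i j; rewrite -Hs outer_sub. done.
have van := vanish l10 ne Eo.
have innA : forall u, inner a u = (a i0 0)^* * u i0 0 + (a i1 0)^* * u i1 0.
  move=> u; apply: inner2 => // k k0 k1; have [-> _] := van k k0 k1; by rewrite conjC0 mul0r.
have innB : forall u, inner b u = (b i0 0)^* * u i0 0 + (b i1 0)^* * u i1 0.
  move=> u; apply: inner2 => // k k0 k1; have [_ ->] := van k k0 k1; by rewrite conjC0 mul0r.
have v0 : vec2 i0 i1 X Y i0 0 = X by rewrite vec2E eqxx.
have v1 : vec2 i0 i1 X Y i1 0 = Y by rewrite vec2E eq_sym (negbTE ne) eqxx.
split.
- rewrite inner_mulV mulmxA (unit_l U) mul1mx.
  rewrite (inner2 ne); last by move=> k k0 k1; rewrite vec2E (negbTE k0) (negbTE k1) mulr0.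
  by rewrite v0 v1 -!normCKC.
- rewrite /fobj !inner_mulV -/a -/b innA innB v0 v1 -fE /F.
  reflexivity.
move=> w hw; rewrite /fobj [inner h1 w](inner_rot _ _ U) [inner h2 w](inner_rot _ _ U) -/a -/b innA innB.
have := ub ((V ^t* *m w) i0 0) ((V ^t* *m w) i1 0).
rewrite /F; apply.
by rewrite -hw [inner w w](inner_rot _ _ U); exact: inner_self_ge.
Qed.


Theorem theorem3 (C : numClosedFieldType) (M : nat) (h1 h2 : 'cV[C]_M) (P : C) :
  h1 != 0 -> h2 != 0 -> 0 < P ->
  (* Scenario 1 *)
  (forall tau : C, h1 = tau *: h2 ->
     let vmax := Num.min (P * norm2 h1) (P * norm2 h2) in
     is_max_at h1 h2 P ((sqrtC P / sqrtC (norm2 h2)) *: h2) vmax /\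
     is_max_at h1 h2 P ((sqrtC P / sqrtC (norm2 h1)) *: h1) vmax)
  /\
  (* Scenario 2 *)
  (forall (V : 'M[C]_M) (l1 l2 : C) (i0 i1 : 'I_M) (ea : C),
     free [:: h1; h2] ->
     val i0 = 0%N -> val i1 = 1%N ->
     V \is unitarymx ->
     0 < l1 -> 0 < l2 ->
     h1 *m h1 ^t* - h2 *m h2 ^t* = V *m Sigma i0 i1 l1 l2 *m V ^t* ->
     let ht1 := V ^t* *m h1 in
     let ht2 := V ^t* *m h2 in
     (* e^{j alpha}, alpha = arg ht2_1 - arg ht2_2, arbitrary if ht2_1 = 0 *)
     `|ea| = 1 ->
     (ht2 i0 0 != 0 -> ea = phase (ht2 i0 0) / phase (ht2 i1 0)) ->
     let eb := phase (ht1 i0 0) in            (* e^{j beta}  *)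
     let eg := phase (ht2 i1 0) in            (* e^{j gamma} *)
     let c2 := l1 / `|ht1 i0 0| ^+ 2 in        (* cos^2 theta *)
     let s := sqrtC (1 - c2) in             (* sin theta   *)
     (l1 <= l2 ->
        (0 <= s <= l1 / l2 ->
           is_max_at h1 h2 P
             (V *m vec2 i0 i1 (sqrtC (P * l2 / (l1 + l2)) * eb)
                              (sqrtC (P * l1 / (l1 + l2)) * (eb / ea)))
             (P * l1 * l2 / (l1 + l2) * ((1 + s) ^+ 2 / c2)))
        /\
        (l1 / l2 < s < 1 ->
           is_max_at h1 h2 P
             (V *m vec2 i0 i1 (sqrtC (P * l1 / (l1 + l2 * s ^+ 2)) * eb)
                              (sqrtC (P * l2 * s ^+ 2 / (l1 + l2 * s ^+ 2)) * (eb / ea)))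
             (P * (l1 + l2 * s ^+ 2) / c2)))
     /\
     (l2 < l1 ->
        (0 <= s <= l2 / l1 ->
           is_max_at h1 h2 P
             (V *m vec2 i0 i1 (sqrtC (P * l2 / (l1 + l2)) * (eg * ea))
                              (sqrtC (P * l1 / (l1 + l2)) * eg))
             (P * l1 * l2 / (l1 + l2) * ((1 + s) ^+ 2 / c2)))
        /\
        (l2 / l1 < s < 1 ->
           is_max_at h1 h2 P
             (V *m vec2 i0 i1 (sqrtC (P * l1 / (l1 + l2 / s ^+ 2)) * (eg * ea))
                              (sqrtC (P * l2 / (l1 * s ^+ 2 + l2)) * eg))
             (P * (l1 * s ^+ 2 + l2) / c2)))).
Proof.
move=> h10 h20 P0; split.
  by move=> tau ht; exact: (scen1 h10 h20 P0 ht).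
move=> V l1 l2 i0 i1 ea fr i00 i11 U l10 l20 E ht1 ht2 e1 hea eb eg c2 s.
have ne : i0 != i1 by apply/eqP => h; move: i00 i11; rewrite h => ->.
have Hs := sigma_rot U E.
have Eo : forall i j, ht1 i 0 * (ht1 j 0)^* - ht2 i 0 * (ht2 j 0)^* = Sigma i0 i1 l1 l2 i j.
  by move=> i j; rewrite -Hs outer_sub.
have H0 : ht1 i0 0 * (ht1 i0 0)^* - ht2 i0 0 * (ht2 i0 0)^* = l1.
  by rewrite Eo sigmaE eqxx mulr1n.
have H1 : ht1 i1 0 * (ht1 i1 0)^* - ht2 i1 0 * (ht2 i1 0)^* = - l2.
  by rewrite Eo sigmaE eqxx eq_sym (negbTE ne) mulr1n.
have H01 : ht1 i1 0 * (ht1 i0 0)^* - ht2 i1 0 * (ht2 i0 0)^* = 0.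
  by rewrite Eo sigmaE eq_sym (negbTE ne) mulr0n.
have BR := bridge ne U l10 E.
have [al0 be0 s0 s1 _] := setup l10 l20 H0 H1 H01.
have A00 : ht1 i0 0 != 0 by rewrite -normr_eq0 gt_eqF.
have B10 : ht2 i1 0 != 0 by rewrite -normr_eq0 gt_eqF.
have ebn : `|eb| = 1 by exact: phase_norm.
have egn : `|eg * ea| = 1 by rewrite normrM e1 mulr1; exact: phase_norm.
have ea0 : ea != 0 by exact: unit_neq0.
split => hl; split => /andP [hc1 hc2]; apply: BR.
- apply: (caseA l10 l20 P0 H0 H1 H01 e1 hea ebn).
    apply: le_trans (_ : s * l1 <= l1) hl.
    by rewrite ler_piMl // ltW.
  by rewrite -ler_pdivlMr.
- apply: (caseB1 l10 l20 P0 H0 H1 H01 e1 hea ebn).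
  by rewrite -ltr_pdivrMr.
- have := caseA l10 l20 P0 H0 H1 H01 e1 hea egn.
  rewrite mulfK //; apply.
    by rewrite -ler_pdivlMr.
  apply: le_trans (_ : s * l2 <= l2) (ltW hl).
  by rewrite ler_piMl // ltW.
- have := caseB2 l10 l20 P0 H0 H1 H01 e1 hea egn.
  rewrite mulfK //; apply.
  by rewrite -ltr_pdivrMr.
Qed.
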